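(* Let $n\ge 2$ and $\underline a\in I^n$ with $\Omega(\underline a)=\{i_1,\dots,i_s\}$, $i_1<\dots<i_s$. Then for any $k,l\in\Omega(\underline a)$, $$D_{kl}(x^{\underline a}x_kx_l)\in\mathrm{span}_{\mathbb F}\{D_{i_ji_{j+1}}(x^{\underline a}x_{i_j}x_{i_{j+1}})\mid 1\le j\le s-1\}.$$
   Context: $\mathbb F$ is a field of characteristic $p>2$, $I=\{0,\dots,p-1\}$. $\mathcal A(n)$ is the truncated polynomial algebra with basis $x^{\underline a}=x_1^{a_1}\cdots x_n^{a_n}$, $\underline a\in I^n$, and $x^{\underline a}x^{\underline b}=x^{\underline a+\underline b}$ ($=0$ if $\underline a+\underline b\notin I^n$); $\partial_i$ are the derivations with $\partial_i(x_j)=\delta_{ij}$, and $D_{ij}(f)=\partial_j(f)\partial_i-\partial_i(f)\partial_j\in W(n)=\mathrm{Der}\,\mathcal A(n)$. For $\underline a\in I^n$, $\Omega(\underline a)=\{i\mid a_i\neq p-1\}$. *)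

(* Defs.v *)
From HB Require Import structures.
From mathcomp Require Import all_boot all_order all_algebra.
Set Implicit Arguments. Unset Strict Implicit. Unset Printing Implicit Defensive.
Import GRing.Theory.
Local Open Scope ring_scope.

Notation expo n p := {ffun 'I_n -> 'I_p}.

(* The truncated polynomial algebra A(n): F-linear combinations of the
   monomials x^a, a in I^n (coefficient functions). *)
Notation Alg F n p := {ffun expo n p -> F^o}.

(* x^e for a nat-valued exponent e: the basis monomial x^e if e in I^n,
   and 0 otherwise (truncation). *)
Definition xmon (F : fieldType) (n p : nat) (e : 'I_n -> nat) : Alg F n p :=
  [ffun b : expo n p => ([forall i, (b i : nat) == e i])%:R].

Definition xpow (F : fieldType) (n p : nat) (a : expo n p) : Alg F n p :=
  xmon F p (fun i => (a i : nat)).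

Definition xvar (F : fieldType) (n p : nat) (k : 'I_n) : Alg F n p :=
  xmon F p (fun i => nat_of_bool (i == k)).

Definition amul (F : fieldType) (n p : nat) (f g : Alg F n p) : Alg F n p :=
  \sum_(a : expo n p) \sum_(b : expo n p)
     (f a * g b) *: xmon F p (fun i => (a i : nat) + b i).

Definition pd (F : fieldType) (n p : nat) (i : 'I_n) (f : Alg F n p) : Alg F n p :=
  \sum_(a : expo n p)
     (f a * (a i : nat)%:R) *: xmon F p (fun j => if j == i then (a j : nat).-1 else a j).

(* W(n) = Der A(n), a free A(n)-module with basis d_1,...,d_n:
   a derivation sum_j f_j d_j is represented by its coefficient vector (f_j)_j. *)
Notation Wn F n p := {ffun 'I_n -> Alg F n p}.

Definition Dop (F : fieldType) (n p : nat) (k l : 'I_n) (f : Alg F n p) : Wn F n p :=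
  [ffun j => ((j == k)%:R *: pd l f) - ((j == l)%:R *: pd k f)].

Definition Omega (n p : nat) (a : expo n p) : {set 'I_n} :=
  [set i | (a i : nat) != p.-1].

Definition omseq (n p : nat) (a : expo n p) : seq 'I_n :=
  [seq i <- enum 'I_n | i \in Omega a].

Definition ompairs (n p : nat) (a : expo n p) : seq ('I_n * 'I_n) :=
  zip (omseq a) (behead (omseq a)).

(* Main.v *)
Require Import Defs.
From HB Require Import structures.
From mathcomp Require Import all_boot all_order all_algebra.
From mathcomp Require Import zify.
Import GRing.Theory.
Local Open Scope ring_scope.
Set Implicit Arguments. Unset Strict Implicit.

Section S.
Variables (F : fieldType) (n p : nat).

Lemma eq_xmon (e e' : 'I_n -> nat) : e =1 e' -> xmon F p e = xmon F p e'.
Proof. move=> H; apply/ffunP => b; rewrite !ffunE. have -> : [forall i, (b i : nat) == e i] = [forall i, (b i : nat) == e' i] by apply: eq_forallb => i; rewrite H. by []. Qed.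

Lemma xmon_out (e : 'I_n -> nat) i : (p <= e i)%N -> xmon F p e = 0.
Proof.
move=> Hi; apply/ffunP => b; rewrite !ffunE.
case: forallP => // /(_ i) /eqP H; have := ltn_ord (b i); rewrite H; lia.
Qed.

Definition mkE (e : 'I_n -> nat) (H : forall i, (e i < p)%N) : expo n p :=
  [ffun i => Ordinal (H i)].

Lemma xmon_in (e : 'I_n -> nat) (H : forall i, (e i < p)%N) b :
  xmon F p e b = (b == mkE H)%:R.
Proof.
rewrite !ffunE; congr (_%:R); congr nat_of_bool; apply/idP/idP.
  by move=> /forallP Hb; apply/eqP/ffunP => i; rewrite ffunE; apply/val_inj; apply/eqP/Hb.
by move=> /eqP -> ; apply/forallP => i; rewrite ffunE.
Qed.

Lemma sum_xmon (V : lmodType F) (e : 'I_n -> nat) (H : forall i, (e i < p)%N)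
  (G : expo n p -> V) :
  \sum_(b : expo n p) xmon F p e b *: G b = G (mkE H).
Proof.
rewrite (bigD1 (mkE H)) //= big1 ?addr0.
  by rewrite xmon_in eqxx scale1r.
by move=> b /negbTE Hb; rewrite xmon_in Hb scale0r.
Qed.

Lemma amul_xmon (e e' : 'I_n -> nat) :
  amul (xmon F p e) (xmon F p e') = xmon F p (fun i => e i + e' i)%N.
Proof.
case: (boolP [forall i, e i < p]%N) => [/forallP H|/forallPn [i Hi]]; last first.
  rewrite (xmon_out (i:=i)); last by rewrite leqNgt.
  rewrite (xmon_out (e := fun i => (e i + e' i)%N) (i:=i)); last by move: Hi; rewrite -leqNgt => Hi; lia.
  by rewrite /amul big1 // => a _; rewrite big1 // => b _; rewrite ffunE mul0r scale0r.
rewrite /amul.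
under eq_bigr do (under eq_bigr do rewrite -scalerA; rewrite -scaler_sumr).
rewrite (sum_xmon H (fun a => \sum_b (xmon F p e' b *: xmon F p (fun i => (a i : nat) + b i)%N))).
case: (boolP [forall i, e' i < p]%N) => [/forallP H'|/forallPn [i Hi]]; last first.
  rewrite (xmon_out (i:=i)); last by rewrite leqNgt.
  rewrite (xmon_out (e := fun j => (e j + e' j)%N) (i:=i)); last by move: Hi; rewrite -leqNgt => Hi; lia.
  by rewrite big1 // => b _; rewrite ffunE scale0r.
rewrite (sum_xmon H' (fun b => xmon F p (fun i => ((mkE H) i : nat) + b i)%N)).
by apply: eq_xmon => i; rewrite !ffunE.
Qed.

Lemma pd_xmon (e : 'I_n -> nat) (H : forall i, (e i < p)%N) i :
  pd i (xmon F p e) = (e i)%:R *: xmon F p (fun j => if j == i then (e j).-1 else e j).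
Proof.
rewrite /pd; under eq_bigr do rewrite -scalerA.
rewrite (sum_xmon H (fun a => ((a i : nat)%:R : F^o) *: xmon F p (fun j => if j == i then (a j : nat).-1 else a j))).
rewrite ffunE; congr (_ *: _); apply: eq_xmon => j; by rewrite ffunE.
Qed.

End S.
Lemma mem_zip_in (S T : eqType) (s : seq S) (t : seq T) x y :
  (x, y) \in zip s t -> x \in s /\ y \in t.
Proof.
elim: s t => [|a s IH] [|b t] //=.
rewrite in_cons => /orP [/eqP [-> ->]|/IH [H1 H2]]; first by split; apply: mem_head.
by rewrite !in_cons H1 H2 !orbT.
Qed.

Section Tele.
Variables (F : fieldType) (T : eqType) (V : lmodType F) (g : T -> V).

Definition spanned (r : seq (T * T)) (v : V) :=
  exists d : T * T -> F, v = \sum_(q <- r) d q *: (g q.1 - g q.2).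

Lemma spannedB r u v : spanned r u -> spanned r v -> spanned r (u - v).
Proof.
move=> [d1 ->] [d2 ->]; exists (fun q => d1 q - d2 q).
rewrite -sumrB; apply: eq_bigr => q _; by rewrite scalerBl.
Qed.

Lemma spanned0 r : spanned r 0.
Proof. by exists (fun _ => 0); rewrite big1 // => q _; rewrite scale0r. Qed.

Lemma spanned_cons q0 r v : q0 \notin r -> spanned r v -> spanned (q0 :: r) v.
Proof.
move=> Hq [d ->]; exists (fun q => if q == q0 then 0 else d q).
rewrite big_cons eqxx scale0r add0r big_seq [RHS]big_seq.
by apply: eq_bigr => q Hqr; case: eqP => // E; rewrite -E Hqr in Hq.
Qed.

Lemma spanned_gen q0 r : q0 \notin r -> spanned (q0 :: r) (g q0.1 - g q0.2).
Proof.
move=> Hq; exists (fun q => (q == q0)%:R).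
rewrite big_cons eqxx scale1r big_seq big1 ?addr0 // => q Hqr.
by case: eqP => [E|]; [rewrite -E Hqr in Hq | rewrite scale0r].
Qed.

Lemma tele s : uniq s -> forall x y, x \in s -> y \in s ->
  spanned (zip s (behead s)) (g x - g y).
Proof.
elim: s => [|h t IH] //= /andP [hnt ut] x y.
case: t IH hnt ut => [|t0 t'] IH hnt ut.
  by rewrite !inE => /eqP -> /eqP ->; rewrite subrr; apply: spanned0.
have Hq : (h, t0) \notin zip (t0 :: t') (behead (t0 :: t')).
  by apply/negP => /mem_zip_in [H _]; rewrite H in hnt.
have Hz : forall z, z \in h :: t0 :: t' ->
  spanned ((h, t0) :: zip (t0 :: t') t') (g z - g t0).
  move=> z; rewrite in_cons => /orP [/eqP ->|Hz]; first exact: spanned_gen.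
  apply: spanned_cons => //; apply: IH => //; exact: mem_head.
move=> Hx Hy.
have -> : g x - g y = (g x - g t0) - (g y - g t0).
  by rewrite opprB addrA subrK.
by apply: spannedB; apply: Hz.
Qed.

End Tele.
Section Key.
Variables (F : fieldType) (n p : nat) (a : expo n p).

Definition alpha i : F := ((a i : nat) + 1)%:R.
Definition Gv i : Wn F n p :=
  (alpha i)^-1 *: [ffun j => (j == i)%:R *: xmon F p (fun m => (a m : nat) + (m == i))%N].

Lemma Omega_lt i : i \in Omega a -> ((a i : nat) + 1 < p)%N.
Proof. rewrite inE => H; have := ltn_ord (a i); move: H; lia. Qed.

Lemma alpha_neq0 (hchar : p \in [pchar F]) i : i \in Omega a -> alpha i != 0.
Proof.
move=> /Omega_lt H; rewrite /alpha -(dvdn_pcharf hchar).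
apply/negP => /dvdn_leq; lia.
Qed.

Lemma key (hchar : p \in [pchar F]) k l : k \in Omega a -> l \in Omega a ->
  Dop k l (amul (amul (xpow F a) (xvar F p k)) (xvar F p l)) =
  (alpha k * alpha l) *: (Gv k - Gv l).
Proof.
move=> hk hl; case: (eqVneq k l) => [<-|kl].
  by apply/ffunP => j; rewrite !ffunE subrr subrr scaler0.
rewrite /xpow /xvar !amul_xmon.
have Hk := Omega_lt hk; have Hl := Omega_lt hl.
have He : forall i, ((a i : nat) + (i == k) + (i == l) < p)%N.
  move=> i; have := ltn_ord (a i); case: (eqVneq i k) => [->|ik].
    by rewrite (negbTE kl) /=; lia.
  case: (eqVneq i l) => [->|il] /=; lia.
apply/ffunP => j; rewrite !ffunE !(pd_xmon F He).
rewrite (@eq_xmon F n p _ (fun m => (a m : nat) + (m == k))%N); last first.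
  move=> m; case: (eqVneq m l) => [->|ml]; first by rewrite addn1.
  by rewrite addn0.
rewrite (@eq_xmon F n p (fun j => if j == k then _ else _) (fun m => (a m : nat) + (m == l))%N); last first.
  move=> m; case: (eqVneq m k) => [->|mk]; first by rewrite addn1.
  by rewrite addn0.
have -> : (a l + (l == k) + (l == l))%N = (a l + 1)%N by rewrite (eq_sym l k) (negbTE kl) eqxx addn0.
have -> : (a k + (k == k) + (k == l))%N = (a k + 1)%N by rewrite (negbTE kl) eqxx addn0.
rewrite -/(alpha l) -/(alpha k) scalerBr !scalerA.
have ak := alpha_neq0 hchar hk; have al := alpha_neq0 hchar hl.
congr (_ *: _ - _ *: _).
  by rewrite [alpha k * _]mulrC mulfK // mulrC.
by rewrite mulfK // mulrC.
Qed.
End Key.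

Unset Implicit Arguments.
Theorem lemma4p2 (F : fieldType) (p n : nat)
  (hp : prime p) (hp2 : (2 < p)%N) (hchar : p \in [pchar F])
  (hn : (2 <= n)%N) (a : expo n p) (k l : 'I_n)
  (hk : k \in Omega a) (hl : l \in Omega a) :
  exists c : 'I_n * 'I_n -> F,
    Dop k l (amul (amul (xpow F a) (xvar F p k)) (xvar F p l)) =
    \sum_(q <- ompairs a)
       c q *: Dop q.1 q.2 (amul (amul (xpow F a) (xvar F p q.1)) (xvar F p q.2)).
Proof.
have uo : uniq (omseq a) by rewrite filter_uniq ?enum_uniq.
have memo : forall i, (i \in omseq a) = (i \in Omega a).
  by move=> i; rewrite mem_filter mem_enum andbT.
have [d Hd] := @tele F _ _ (@Gv F n p a) _ uo k l (etrans (memo k) hk) (etrans (memo l) hl).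
exists (fun q => alpha F a k * alpha F a l * d q / (alpha F a q.1 * alpha F a q.2)).
rewrite (key hchar hk hl) Hd scaler_sumr /ompairs big_seq [RHS]big_seq.
apply: eq_bigr => [[q1 q2]] /mem_zip_in [H1 H2] /=.
have h1 : q1 \in Omega a by rewrite -memo.
have h2 : q2 \in Omega a by rewrite -memo; apply: mem_behead.
rewrite (key hchar h1 h2) !scalerA divfK // mulf_neq0 // alpha_neq0 //.
Qed.
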